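(* Let $M := e_1e_2^\top + e_2e_1^\top\in\mathbb{R}^{d\times d}$. Assume $\alpha \le \frac12$, $a_0\ne0$, $|a_0|\le 1$, $w_0$ a unit vector, and $\mathrm{sign}(a_0) = \mathrm{sign}(q_0)$. Consider the updates \[ a_{t+1} = \mathrm{clip}_{[-1,1]}\big(a_t + \tfrac\alpha2 q_t\big),\quad w_{t+1} = \frac{w_t + \alpha a_t Mw_t}{\|w_t + \alpha a_t M w_t\|_2},\quad q_t := w_t^\top M w_t. \] Let $u_a := \frac{e_1 + \mathrm{sign}(a_0)e_2}{\sqrt2}$, $\gamma_t := |\langle w_t, u_a\rangle|$ and $r_t := \frac{\sqrt{1-\gamma_t^2}}{\gamma_t}$. Then: (1) for all $t\ge0$, $\mathrm{sign}(a_t) = \mathrm{sign}(q_t) = \mathrm{sign}(a_0)$, and $|a_t|$ is non-decreasing; (2) for all $t\ge0$, $r_{t+1} \le \frac{1}{1+\alpha|a_t|}r_t \le \frac{1}{1+\alpha|a_0|}r_t$. Consequently, for any $\varepsilon\in(0,1/2)$, after \[ T_2 := \left\lceil \frac{2}{\alpha|a_0|}\log\Big(\frac{1}{\gamma_0^2\varepsilon}\Big)\right\rceil \] steps we have $\gamma_{T_2}^2 \ge 1-\varepsilon$.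
   Context: $M = \mathbb{E}[yxx^\top]$ is the population moment matrix for $x$ uniform on $\{\pm1\}^d$ and $y = x_1x_2$; these are the Phase-2 (population) projected gradient updates for $f(x) = \frac12 a(w^\top x)^2$ under correlation loss. *)

(* Defs.v *)
From HB Require Import structures.
From mathcomp Require Import all_boot all_order all_algebra.
From mathcomp Require Import all_classical all_reals all_analysis.
Set Implicit Arguments. Unset Strict Implicit. Unset Printing Implicit Defensive.
Import Order.TTheory GRing.Theory Num.Theory.
Local Open Scope ring_scope.

Section Defs.
Variable R : realType.
Variable n : nat.
(* ambient dimension d = n.+2 (so d >= 2 and e_1, e_2 exist) *)
Notation vec := 'cV[R]_(n.+2).

Definition e1 : vec := \col_(i < n.+2) (i == 0 :> nat)%:R.
Definition e2 : vec := \col_(i < n.+2) (i == 1 :> nat)%:R.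

Definition Mx : 'M[R]_(n.+2) := e1 *m e2^T + e2 *m e1^T.

Definition dotv (u v : vec) : R := (u^T *m v) 0 0.
Definition norm2 (u : vec) : R := Num.sqrt (dotv u u).

Definition qf (w : vec) : R := dotv w (Mx *m w).

Definition clip (x : R) : R := Num.max (-1) (Num.min 1 x).

Definition ua (a0 : R) : vec := (Num.sqrt 2)^-1 *: (e1 + Num.sg a0 *: e2).

Definition gam (a0 : R) (w : vec) : R := `|dotv w (ua a0)|.

Definition rr (a0 : R) (w : vec) : R :=
  Num.sqrt (1 - gam a0 w ^+ 2) / gam a0 w.
End Defs.
Arguments e1 {R n}.
Arguments e2 {R n}.
Arguments Mx {R n}.

(* Main.v *)
Require Import Defs.
From HB Require Import structures.
From mathcomp Require Import all_boot all_order all_algebra.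
From mathcomp Require Import all_classical all_reals all_analysis.
From mathcomp Require Import ring lra.
Import Order.TTheory GRing.Theory Num.Theory.
Local Open Scope ring_scope.
Set Implicit Arguments. Unset Strict Implicit.

Section H.
Variables (R : realType) (n : nat).
Notation vec := 'cV[R]_(n.+2).
Definition i1 : 'I_(n.+2) := lift ord0 ord0.
Definition X (w : vec) := w ord0 0.
Definition Y (w : vec) := w i1 0.

Lemma dotvE (u v : vec) : dotv u v = \sum_i u i 0 * v i 0.
Proof. by rewrite /dotv !mxE; apply: eq_bigr => i _; rewrite mxE. Qed.

Lemma dotvC (u v : vec) : dotv u v = dotv v u.
Proof. by rewrite !dotvE; apply: eq_bigr => i _; rewrite mulrC. Qed.

Lemma dotvDr (u v z : vec) : dotv u (v + z) = dotv u v + dotv u z.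
Proof. by rewrite !dotvE -big_split; apply: eq_bigr => i _; rewrite !mxE mulrDr. Qed.

Lemma dotvZr (u v : vec) c : dotv u (c *: v) = c * dotv u v.
Proof. by rewrite !dotvE mulr_sumr; apply: eq_bigr => i _; rewrite !mxE mulrCA. Qed.

Lemma dotvDl (u v z : vec) : dotv (v + z) u = dotv v u + dotv z u.
Proof. by rewrite dotvC dotvDr !(dotvC u). Qed.

Lemma dotvZl (u v : vec) c : dotv (c *: v) u = c * dotv v u.
Proof. by rewrite dotvC dotvZr dotvC. Qed.

Lemma dotv_ge0 (u : vec) : 0 <= dotv u u.
Proof. by rewrite dotvE; apply: sumr_ge0 => i _; rewrite -expr2 sqr_ge0. Qed.

Lemma sum2 (F : 'I_n.+2 -> R) :
  (forall i : 'I_n, F (lift ord0 (lift ord0 i)) = 0) ->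
  \sum_i F i = F ord0 + F i1.
Proof.
move=> H; rewrite big_ord_recl big_ord_recl big1 ?addr0 //.
Qed.

Lemma e1E (i : 'I_n.+2) : (e1 : vec) i 0 = (i == 0 :> nat)%:R.
Proof. by rewrite mxE. Qed.
Lemma e2E (i : 'I_n.+2) : (e2 : vec) i 0 = (i == 1 :> nat)%:R.
Proof. by rewrite mxE. Qed.

Lemma dot_e1 (w : vec) : dotv e1 w = X w.
Proof. by rewrite dotvE sum2 => [|i]; rewrite !e1E /= ?mul1r ?mul0r ?addr0. Qed.
Lemma dot_e2 (w : vec) : dotv e2 w = Y w.
Proof. by rewrite dotvE sum2 => [|i]; rewrite !e2E /= ?mul1r ?mul0r ?add0r. Qed.

Lemma MwE (w : vec) (i : 'I_n.+2) :
  (Mx *m w) i 0 = (i == 0 :> nat)%:R * Y w + (i == 1 :> nat)%:R * X w.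
Proof.
rewrite /Mx mulmxDl -!mulmxA !mxE !big_ord1 !mxE.
rewrite -dot_e1 -dot_e2 !dotvE.
by congr (_ * _ + _ * _); apply: eq_bigr => j _; rewrite mxE.
Qed.

Lemma dot_wMw (w : vec) : dotv w (Mx *m w) = 2 * X w * Y w.
Proof.
rewrite dotvE sum2 => [|i]; rewrite !MwE /= ?mul0r ?addr0 ?mulr0 //.
rewrite /X /Y; ring.
Qed.

Lemma dot_MwMw (w : vec) : dotv (Mx *m w) (Mx *m w) = X w ^+ 2 + Y w ^+ 2.
Proof.
rewrite dotvE sum2 => [|i]; rewrite !MwE /= ?mul0r ?addr0 ?mulr0 //.
rewrite /X /Y; ring.
Qed.

Lemma XD (u v : vec) : X (u + v) = X u + X v. Proof. by rewrite /X mxE. Qed.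
Lemma YD (u v : vec) : Y (u + v) = Y u + Y v. Proof. by rewrite /Y mxE. Qed.
Lemma XZ (u : vec) c : X (c *: u) = c * X u. Proof. by rewrite /X mxE. Qed.
Lemma YZ (u : vec) c : Y (c *: u) = c * Y u. Proof. by rewrite /Y mxE. Qed.
Lemma XM (u : vec) : X (Mx *m u) = Y u. Proof. by rewrite /X MwE /= mul1r mul0r addr0. Qed.
Lemma YM (u : vec) : Y (Mx *m u) = X u. Proof. by rewrite /Y MwE /= mul1r mul0r add0r. Qed.

Lemma dot_ua a0 (w : vec) : dotv w (ua n a0) = (Num.sqrt 2)^-1 * (X w + Num.sg a0 * Y w).
Proof. by rewrite /ua dotvZr dotvDr dotvZr !(dotvC w) dot_e1 dot_e2. Qed.


Lemma u2 : ((Num.sqrt (2:R))^-1) ^+ 2 = 2^-1.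
Proof. by rewrite exprVn sqr_sqrtr // ler0n. Qed.

Lemma sq_norm (x : R) : `|x| ^+ 2 = x ^+ 2.
Proof. by rewrite real_normK // num_real. Qed.

Lemma step (a0 s c b : R) (w : vec) :
  Num.sg a0 = s -> (s = 1 \/ s = -1) ->
  dotv w w = 1 -> 0 < s * (X w * Y w) -> c = s * b -> 0 < b -> b <= 1/2 ->
  let v := w + c *: (Mx *m w) in
  let w' := (norm2 v)^-1 *: v in
  dotv w' w' = 1 /\ 0 < s * (X w' * Y w') /\ rr a0 w' <= (1+b)^-1 * rr a0 w.
Proof.
move=> hs hs2 hN hxy hc hb0 hb1 v w'.
set x := X w; set y := Y w.
have hN' : dotv v v = 1 + c * (4 * x * y) + c ^+ 2 * (x ^+ 2 + y ^+ 2).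
  rewrite /v !dotvDl !dotvDr !dotvZl !dotvZr hN dot_MwMw (dotvC (Mx *m w)) dot_wMw -/x -/y.
  ring.
have hN1 : 1 <= dotv v v.
  rewrite hN'; have h1 : 0 <= c * (4 * x * y).
    have -> : c * (4 * x * y) = 4 * b * (s * (x * y)).
      by rewrite hc; case: hs2 => ->; ring.
    by apply: mulr_ge0; [lra|exact: ltW].
  have h2 : 0 <= c ^+ 2 * (x ^+ 2 + y ^+ 2) by apply: mulr_ge0; rewrite ?sqr_ge0 ?addr_ge0 ?sqr_ge0.
  lra.
set N := dotv v v in hN' hN1.
have hk : 0 < Num.sqrt N by rewrite sqrtr_gt0; lra.
set k : R := (Num.sqrt N)^-1.
have hk0 : 0 < k by rewrite invr_gt0.
have hkN : k ^+ 2 * N = 1 by rewrite exprVn sqr_sqrtr ?mulVf //; lra.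
have hX' : X w' = k * (x + c * y) by rewrite /w' /v XZ XD XZ XM.
have hY' : Y w' = k * (y + c * x) by rewrite /w' /v YZ YD YZ YM.
split; first by rewrite /w' dotvZl dotvZr mulrA -expr2.
split.
  have -> : s * (X w' * Y w') = k ^+ 2 * ((1 + b ^+ 2) * (s * (x * y)) + b * (x ^+ 2 + y ^+ 2)).
    by rewrite hX' hY' hc; case: hs2 => ->; ring.
  apply: mulr_gt0; first by rewrite exprn_gt0.
  apply: ltr_wpDr; first by apply: mulr_ge0; rewrite ?(ltW hb0) ?addr_ge0 ?sqr_ge0.
  apply: mulr_gt0 => //; have := sqr_ge0 b; lra.
rewrite /rr /gam !dot_ua hs hX' hY'.
set u := (Num.sqrt 2)^-1.
have hU : u * (k * (x + c * y) + s * (k * (y + c * x))) = k * (1 + b) * (u * (x + s * y)).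
  by rewrite hc; case: hs2 => ->; ring.
rewrite hU.
have [g hg] : exists g, g = u * (x + s * y) by eexists.
rewrite -hg.
have h1b : 0 < 1 + b by lra.
rewrite normrM (ger0_norm (ltW (mulr_gt0 hk0 h1b))).
have hD : 1 - (k * (1 + b) * `|g|) ^+ 2 = k ^+ 2 * (N - (1 + b) ^+ 2 * g ^+ 2).
  rewrite exprMn sq_norm mulrBr hkN exprMn. ring.
rewrite hD sqrtrM ?exprn_ge0 ?(ltW hk0) // sqrtr_sqr (ger0_norm (ltW hk0)).
have [g0|gn0] := eqVneq g 0.
  by rewrite g0 normr0 !mulr0 invr0 !mulr0.
have hgn : `|g| != 0 by rewrite normr_eq0.
have -> : k * Num.sqrt (N - (1 + b) ^+ 2 * g ^+ 2) / (k * (1 + b) * `|g|)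
   = (1 + b)^-1 * (Num.sqrt (N - (1 + b) ^+ 2 * g ^+ 2) / `|g|).
  by field; rewrite hgn !gt_eqF.
rewrite ler_wpM2l ?invr_ge0 ?(ltW h1b) //.
rewrite ler_wpM2r ?invr_ge0 ?normr_ge0 // ler_wsqrtr // sq_norm.
rewrite hN' hg exprMn u2 hc.
have -> : 1 + s * b * (4 * x * y) + (s * b) ^+ 2 * (x ^+ 2 + y ^+ 2) -
    (1 + b) ^+ 2 * (2^-1 * (x + s * y) ^+ 2) = 1 - 2^-1 * (x + s * y) ^+ 2 - b * (1 - b / 2) * (x - s * y) ^+ 2.
  by case: hs2 => ->; field.
have : 0 <= b * (1 - b / 2) * (x - s * y) ^+ 2.
  by apply: mulr_ge0; [apply: mulr_ge0|exact: sqr_ge0]; lra.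
lra.
Qed.

Lemma gam_pos (a0 s : R) (w : vec) : Num.sg a0 = s -> (s = 1 \/ s = -1) ->
  0 < s * (X w * Y w) -> 0 < gam a0 w.
Proof.
move=> hs hs2 hxy; rewrite /gam dot_ua hs normr_gt0 mulf_neq0 //.
apply/negP => /eqP h0.
have hx : X w = - (s * Y w) by apply/eqP; rewrite -addr_eq0 h0.
move: hxy; rewrite hx; case: hs2 => -> => h; have := sqr_ge0 (Y w); nra.
Qed.
End H.
Section H2.
Lemma sg_pos {R : realType} {x : R} : Num.sg x = 1 -> 0 < x.
Proof. by move=> h; rewrite -(sgr_cp0 x).1.1 h. Qed.
Lemma sg_neg {R : realType} {x : R} : Num.sg x = -1 -> x < 0.
Proof. by move=> h; rewrite -(sgr_cp0 x).1.2 h. Qed.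

Lemma astep (R : realType) (s x q al : R) : (s = 1 \/ s = -1) ->
  Num.sg x = s -> `|x| <= 1 -> 0 < s * q -> 0 < al ->
  let a' := clip (x + al / 2 * q) in
  Num.sg a' = s /\ `|a'| <= 1 /\ `|x| <= `|a'|.
Proof.
move=> hs hsa ha hq hal a'.
have hz : 0 < s * (al / 2 * q) by rewrite mulrCA; apply: mulr_gt0 => //; lra.
rewrite /a' /clip; set z := x + al / 2 * q.
have hzx : z = x + s * (s * (al / 2 * q)) by rewrite mulrA; case: hs => ->; rewrite /z; ring.
case: hs => hs; rewrite hs in hsa hz hzx *.
  have hx := sg_pos hsa; rewrite mul1r in hz.
  rewrite (gtr0_norm hx) in ha *.
  case: (leP 1 z) => h1.
    case: (leP (-1) 1) => h2; last by lra.
    by rewrite gtr0_sg ?normr1 //; split => //; split => //; lra.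
  case: (leP (-1) z) => h2; last by lra.
  by rewrite gtr0_sg ?gtr0_norm //; lra.
have hx := sg_neg hsa; rewrite mulN1r in hz.
rewrite (ltr0_norm hx) in ha *.
case: (leP 1 z) => h1; first by lra.
case: (leP (-1) z) => h2.
  by rewrite ltr0_sg ?ltr0_norm //; lra.
by rewrite ltr0_sg ?normrN1 //; split => //; split => //; lra.
Qed.
End H2.

Lemma sq1 (R : realType) (X : R) : Num.sqrt (1 - X ^+ 2) ^+ 2 <= 1.
Proof.
case: (lerP 0 (1 - X ^+ 2)) => hX.
  rewrite sqr_sqrtr //; have := sqr_ge0 X; lra.
have -> : Num.sqrt (1 - X ^+ 2) = 0 by apply/eqP; rewrite sqrtr_eq0 ltW.
by rewrite expr0n ler01.
Qed.

Unset Implicit Arguments.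
Theorem lemma10 (R : realType) (n : nat) (alpha : R)
  (a : nat -> R) (w : nat -> 'cV[R]_(n.+2)) :
  0 < alpha -> alpha <= 1 / 2 ->
  a 0%N != 0 -> `|a 0%N| <= 1 ->
  norm2 (w 0%N) = 1 ->
  Num.sg (a 0%N) = Num.sg (qf (w 0%N)) ->
  (forall t, a t.+1 = clip (a t + alpha / 2 * qf (w t))) ->
  (forall t, w t.+1 =
     (norm2 (w t + (alpha * a t) *: (Mx *m w t)))^-1
       *: (w t + (alpha * a t) *: (Mx *m w t))) ->
  (forall t, Num.sg (a t) = Num.sg (a 0%N) /\ Num.sg (qf (w t)) = Num.sg (a 0%N)
             /\ `|a t| <= `|a t.+1|) /\
  (forall t, rr (a 0%N) (w t.+1) <= (1 + alpha * `|a t|)^-1 * rr (a 0%N) (w t)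
             /\ (1 + alpha * `|a t|)^-1 * rr (a 0%N) (w t)
                  <= (1 + alpha * `|a 0%N|)^-1 * rr (a 0%N) (w t)) /\
  (forall eps : R, 0 < eps -> eps < 1 / 2 ->
     let T2 := `|Num.ceil (2 / (alpha * `|a 0%N|)
                  * ln ((gam (a 0%N) (w 0%N) ^+ 2 * eps)^-1))|%N in
     gam (a 0%N) (w T2) ^+ 2 >= 1 - eps).
Proof.
move=> hal0 hal1 ha0 ha01 hw0 hsq ha hw.
set s := Num.sg (a 0%N).
have hs2 : s = 1 \/ s = -1.
  case: (ltrgtP (a 0%N) 0) => h; [right; exact: ltr0_sg | left; exact: gtr0_sg |].
  by rewrite h eqxx in ha0.
have hss : s * s = 1 by case: hs2 => ->; rewrite ?mulr1 ?mulrNN ?mulr1.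
have qE : forall v : 'cV[R]_(n.+2), qf v = 2 * (X v * Y v).
  by move=> v; rewrite /qf dot_wMw mulrA.
pose Inv t := dotv (w t) (w t) = 1 /\ Num.sg (a t) = s /\ `|a t| <= 1
   /\ 0 < s * (X (w t) * Y (w t)).
have Inv0 : Inv 0%N.
  split.
    have := hw0; rewrite /norm2 => h.
    by rewrite -(sqr_sqrtr (dotv_ge0 (w 0%N))) h expr1n.
  split => //; split => //.
  have hq0 : qf (w 0%N) != 0 by rewrite -sgr_eq0 -hsq -/s; case: hs2 => ->; rewrite ?oppr_eq0 oner_eq0.
  have : 0 < s * qf (w 0%N) by rewrite /s hsq -normrEsg normr_gt0.
  rewrite qE; lra.
have Step : forall t, Inv t ->
   [/\ Inv t.+1, `|a t| <= `|a t.+1|, 0 < alpha * `|a t|, alpha * `|a t| <= 1/2 &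
    rr (a 0%N) (w t.+1) <= (1 + alpha * `|a t|)^-1 * rr (a 0%N) (w t)].
  move=> t [hN [hsa [hat hxy]]].
  have hat0 : a t != 0 by rewrite -sgr_eq0 hsa; case: hs2 => ->; rewrite ?oppr_eq0 oner_eq0.
  have hb0 : 0 < alpha * `|a t| by rewrite mulr_gt0 ?normr_gt0.
  have hb1 : alpha * `|a t| <= 1/2.
    have : alpha * `|a t| <= alpha * 1 by rewrite ler_wpM2l // ltW.
    lra.
  have hc : alpha * a t = s * (alpha * `|a t|).
    by rewrite normrEsg hsa mulrCA (mulrA s s) hss mul1r.
  have [hN' [hxy' hr]] := step (erefl s) hs2 hN hxy hc hb0 hb1.
  rewrite -hw in hN' hxy' hr.
  have [hsa' [hat' hmono]] := astep hs2 hsa hat (x:=a t) (q := qf (w t)) (al := alpha)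
     ltac:(by rewrite qE; lra) hal0.
  rewrite -ha in hsa' hat' hmono.
  by split.
have inv : forall t, Inv t by elim => // t /Step [].
have mono : forall t, `|a 0%N| <= `|a t|.
  elim => // t IH; have [_ h _ _ _] := Step t (inv t); exact: le_trans h.
have rr0 : forall t, 0 <= rr (a 0%N) (w t).
  by move=> t; rewrite /rr divr_ge0 ?sqrtr_ge0 ?normr_ge0.
have gpos : forall t, 0 < gam (a 0%N) (w t).
  by move=> t; have [_ [_ [_ h]]] := inv t; exact: (gam_pos (erefl s) hs2 h).
have hb0 : 0 < alpha * `|a 0%N| by have [_ _ h _ _] := Step 0%N Inv0.
have hb1 : alpha * `|a 0%N| <= 1/2 by have [_ _ _ h _] := Step 0%N Inv0.
have part2 : forall t, rr (a 0%N) (w t.+1) <= (1 + alpha * `|a t|)^-1 * rr (a 0%N) (w t)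
             /\ (1 + alpha * `|a t|)^-1 * rr (a 0%N) (w t)
                  <= (1 + alpha * `|a 0%N|)^-1 * rr (a 0%N) (w t).
  move=> t; have [_ _ hbt _ hr] := Step t (inv t); split => //.
  rewrite ler_wpM2r // lef_pV2 ?posrE; try lra.
  by rewrite lerD2l ler_wpM2l ?mono // ltW.
split.
  move=> t; have [_ [hsa [_ hxy]]] := inv t; have [_ h _ _ _] := Step t (inv t).
  split => //; split => //.
  rewrite qE; case: hs2 => hs; rewrite hs in hxy *.
    by apply: gtr0_sg; lra.
  by apply: ltr0_sg; lra.
split => //.
move=> eps he0 he1; cbv zeta.
set T := `|Num.ceil _|%N.
set b := alpha * `|a 0%N|.
have {hb0}hb0 : 0 < b := hb0.
have {hb1}hb1 : b <= 1/2 := hb1.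
have h1b : 0 < 1 + b := addr_gt0 ltr01 hb0.
set g0 := gam (a 0%N) (w 0%N).
set K := (g0 ^+ 2 * eps)^-1.
set L := ln K.
have hg0 : 0 < g0 := gpos 0%N.
have hK : 0 < K by rewrite invr_gt0 mulr_gt0 ?exprn_gt0.
have hT : 2 / b * L <= T%:R.
  rewrite /T natr_absz; apply: le_trans (real_ceil_ge (num_real _)) _.
  by rewrite ler_int ler_norm.
have hT0 : 0 <= T%:R :> R := ler0n _ _.
have hTb : L <= T%:R * b.
  have : 2 / b * L * b <= T%:R * b by rewrite ler_wpM2r // ltW.
  have -> : 2 / b * L * b = 2 * L by field; rewrite gt_eqF.
  move=> h1; have h2 : 0 <= T%:R * b by rewrite mulr_ge0 // ltW.
  clear -h1 h2; case: (lerP 0 L) => hL; lra.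
have hexp : expR (b / (1 + b)) <= 1 + b.
  have := expR_ge1Dx (- (b / (1 + b))); rewrite expRN.
  have -> : 1 + - (b / (1 + b)) = (1 + b)^-1 by field; rewrite gt_eqF.
  by rewrite lef_pV2 ?posrE ?expR_gt0 ?h1b.
have hKP : K <= (1 + b) ^+ (2 * T).
  rewrite -[K](@lnK _ K) ?posrE // -/L.
  apply: (@le_trans _ _ (expR ((2 * T)%:R * (b / (1 + b))))).
    rewrite ler_expR natrM.
    have hb2 : b / 2 <= b / (1 + b).
      rewrite ler_wpM2l ?(ltW hb0) // lef_pV2 ?posrE ?h1b //; clear -hb1; lra.
    have : 2 * T%:R * (b / 2) <= 2 * T%:R * (b / (1 + b)).
      by rewrite ler_wpM2l // mulr_ge0.
    have -> : 2 * T%:R * (b / 2) = T%:R * b by field.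
    move=> h; clear -h hTb; lra.
  rewrite expRM_natl; apply: lerXn2r; rewrite ?nnegrE ?expR_ge0 ?(ltW h1b) //.
have hr : forall t, rr (a 0%N) (w t) <= (1 + b)^-1 ^+ t * rr (a 0%N) (w 0%N).
  elim => [|t IH]; first by rewrite expr0 mul1r.
  have [h1 h2] := part2 t.
  have hb' : 0 <= (1 + b)^-1 by rewrite invr_ge0 addr_ge0 // ltW.
  have h3 : (1 + b)^-1 * rr (a 0%N) (w t) <= (1 + b)^-1 * ((1 + b)^-1 ^+ t * rr (a 0%N) (w 0%N)).
    by apply: ler_wpM2l.
  rewrite exprS -mulrA.
  exact: le_trans h1 (le_trans h2 h3).
set r0 := rr (a 0%N) (w 0%N).
have hr0 : r0 ^+ 2 * g0 ^+ 2 <= 1.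
  by rewrite -exprMn /r0 /rr -/g0 divfK ?gt_eqF // sq1.
have hrT : rr (a 0%N) (w T) ^+ 2 <= eps.
  have h1 : rr (a 0%N) (w T) ^+ 2 <= ((1 + b)^-1 ^+ T * r0) ^+ 2.
    apply: lerXn2r; rewrite ?nnegrE ?rr0 ?mulr_ge0 ?exprn_ge0 ?rr0 ?invr_ge0 ?(ltW h1b) //.
    all: try exact: normr_ge0; try exact: hr.
  apply: (le_trans h1); rewrite exprMn -exprM mulnC exprVn.
  have h2 : ((1 + b) ^+ (2 * T))^-1 <= g0 ^+ 2 * eps.
    by rewrite -[g0 ^+ 2 * eps]invrK lef_pV2 ?posrE ?exprn_gt0 ?h1b ?hK.
  apply: (@le_trans _ _ (g0 ^+ 2 * eps * r0 ^+ 2)).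
    by rewrite ler_wpM2r ?exprn_ge0 ?rr0.
  have -> : g0 ^+ 2 * eps * r0 ^+ 2 = eps * (r0 ^+ 2 * g0 ^+ 2) by ring.
  apply: (@le_trans _ _ (eps * 1)); last by rewrite mulr1.
  apply: ler_wpM2l; [exact: (ltW he0) | exact: hr0].
set gT := gam (a 0%N) (w T).
have hgT : 0 < gT := gpos T.
case: (lerP (1 - gT ^+ 2) 0) => hG; first by clear -hG he0; lra.
have hrg : rr (a 0%N) (w T) ^+ 2 * gT ^+ 2 = 1 - gT ^+ 2.
  by rewrite -exprMn /rr -/gT divfK ?gt_eqF // sqr_sqrtr // ltW.
have e1 : rr (a 0%N) (w T) ^+ 2 * gT ^+ 2 <= eps * gT ^+ 2.
  by rewrite ler_wpM2r ?sqr_ge0.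
have e2 : eps * gT ^+ 2 <= eps * 1.
  by rewrite ler_wpM2l ?(ltW he0) //; clear -hG; lra.
clear -e1 e2 hrg; lra.
Qed.
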